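(* Let $\phi\colon\Gamma\to X$ be a partial flow on a metric space $X$. Let $U\subset X$ be a $\phi$-convex open set with compact closure, and let $\psi=\phi|U$ be the restriction of $\phi$ to $U$. Then the enveloping space $U^e$ of $\psi$ is metrizable.
   Context: A partial flow on a metric space $X$ is a continuous map $\phi\colon\Gamma\to X$ on an open set $\Gamma\subset\mathbb{R}\times X$. It satisfies: $\Gamma_x=\{t:(t,x)\in\Gamma\}$ is a connected set containing $0$; $\Gamma_{\phi_t(x)}=\Gamma_x-t$; $\phi_0=\mathrm{id}$; and $\phi_s\phi_t(x)=\phi_{s+t}(x)$ whenever $s,t,s+t\in\Gamma_x$. Let $J(t)=[0,t]$ if $t\ge0$ and $J(t)=[t,0]$ if $t<0$. For open $U\subset X$, the restriction $\psi=\phi|U$ is the partial flow on $U$ with domain $\Gamma_U=\{(t,x): x\in U,\ J(t)\subset\Gamma_x,\ \phi_{J(t)}(x)\subset U\}$ and $\psi_t(x)=\phi_t(x)$. An open set $U$ is $\phi$-convex if, whenever $t\ge0$, $x\in U$, $\phi_t(x)\in U$ and $\phi_{[0,t]}(x)\subset\overline U$, we have $\phi_{[0,t]}(x)\subset U$. The enveloping space of a partial flow $\psi$ on $U$ is the quotient $U^e=(\mathbb{R}\times U)/\!\sim$ with the quotient topology. Here $\sim$ is the equivalence relation generated by $(r,x)\sim(s,y)$ when $r-s\in\Gamma^\psi_x$ and $y=\psi_{r-s}(x)$. The enveloping flow is induced on $U^e$ by $(s,x)\mapsto(s+t,x)$. *)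

(* Defs.v *)
From Stdlib Require Import Reals Lra List Relations.
Open Scope R_scope.

Record MetricSpace := {
  carrier :> Type;
  dist : carrier -> carrier -> R;
  dist_eq0 : forall x y, dist x y = 0 <-> x = y;
  dist_sym : forall x y, dist x y = dist y x;
  dist_tri : forall x y z, dist x z <= dist x y + dist y z
}.

Definition is_metric {T : Type} (d : T -> T -> R) : Prop :=
  (forall x y, d x y = 0 <-> x = y) /\
  (forall x y, d x y = d y x) /\
  (forall x y z, d x z <= d x y + d y z).

Definition metric_open {T : Type} (d : T -> T -> R) (W : T -> Prop) : Prop :=
  forall x, W x -> exists eps, 0 < eps /\ forall y, d x y < eps -> W y.

Definition mopen {X : MetricSpace} (W : X -> Prop) : Prop := metric_open (dist X) W.

Definition mclosure {X : MetricSpace} (U : X -> Prop) (x : X) : Prop :=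
  forall eps, 0 < eps -> exists y, U y /\ dist X x y < eps.

Definition mcompact {X : MetricSpace} (K : X -> Prop) : Prop :=
  forall (I : Type) (O : I -> X -> Prop),
    (forall i, mopen (O i)) ->
    (forall x, K x -> exists i, O i x) ->
    exists l : list I, forall x, K x -> exists i, In i l /\ O i x.

Definition open_RX {X : MetricSpace} (G : R -> X -> Prop) : Prop :=
  forall t x, G t x -> exists eps, 0 < eps /\
    forall s y, Rabs (s - t) < eps -> dist X x y < eps -> G s y.

(** Partial flow: Gamma is the domain (open in R x X), phi t x is the flow,
    its values outside Gamma being irrelevant. *)
Definition partial_flow {X : MetricSpace} (Gamma : R -> X -> Prop)
  (phi : R -> X -> X) : Prop :=
  open_RX Gamma /\
  (forall t x, Gamma t x -> forall eps, 0 < eps -> exists delta, 0 < delta /\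
     forall s y, Gamma s y -> Rabs (s - t) < delta -> dist X x y < delta ->
       dist X (phi t x) (phi s y) < eps) /\
  (forall x, Gamma 0 x) /\
  (forall x s t u, Gamma s x -> Gamma t x -> s <= u <= t -> Gamma u x) /\
  (forall t x, Gamma t x -> forall s, Gamma s (phi t x) <-> Gamma (s + t) x) /\
  (forall x, phi 0 x = x) /\
  (forall s t x, Gamma s x -> Gamma t x -> Gamma (s + t) x ->
     phi s (phi t x) = phi (s + t) x).

Definition J (t s : R) : Prop := if Rle_dec 0 t then 0 <= s <= t else t <= s <= 0.

Definition phi_convex {X : MetricSpace} (Gamma : R -> X -> Prop)
  (phi : R -> X -> X) (U : X -> Prop) : Prop :=
  forall t x, 0 <= t -> U x -> Gamma t x -> U (phi t x) ->
    (forall s, 0 <= s <= t -> mclosure U (phi s x)) ->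
    forall s, 0 <= s <= t -> U (phi s x).

Definition sub {X : MetricSpace} (U : X -> Prop) : Type := {x : X | U x}.

(** Domain of the restriction psi = phi|U *)
Definition GammaU {X : MetricSpace} (Gamma : R -> X -> Prop)
  (phi : R -> X -> X) (U : X -> Prop) (t : R) (x : X) : Prop :=
  U x /\ forall s, J t s -> Gamma s x /\ U (phi s x).

Definition env_gen {X : MetricSpace} (Gamma : R -> X -> Prop)
  (phi : R -> X -> X) (U : X -> Prop) (p q : R * sub U) : Prop :=
  GammaU Gamma phi U (fst p - fst q) (proj1_sig (snd p)) /\
  proj1_sig (snd q) = phi (fst p - fst q) (proj1_sig (snd p)).

Definition env_equiv {X : MetricSpace} (Gamma : R -> X -> Prop)
  (phi : R -> X -> X) (U : X -> Prop) : relation (R * sub U) :=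
  clos_refl_sym_trans _ (env_gen Gamma phi U).

Definition Ue {X : MetricSpace} (Gamma : R -> X -> Prop)
  (phi : R -> X -> X) (U : X -> Prop) : Type :=
  { C : R * sub U -> Prop | exists p, C = env_equiv Gamma phi U p }.

Definition env_cls {X : MetricSpace} (Gamma : R -> X -> Prop)
  (phi : R -> X -> X) (U : X -> Prop) (p : R * sub U) : Ue Gamma phi U :=
  exist _ (env_equiv Gamma phi U p) (ex_intro _ p eq_refl).

Definition open_RU {X : MetricSpace} (U : X -> Prop) (W : R * sub U -> Prop) : Prop :=
  forall p, W p -> exists eps, 0 < eps /\ forall q,
    Rabs (fst q - fst p) < eps ->
    dist X (proj1_sig (snd p)) (proj1_sig (snd q)) < eps -> W q.

Definition Ue_open {X : MetricSpace} (Gamma : R -> X -> Prop)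
  (phi : R -> X -> X) (U : X -> Prop) (W : Ue Gamma phi U -> Prop) : Prop :=
  open_RU U (fun p => W (env_cls Gamma phi U p)).

Definition Ue_metrizable {X : MetricSpace} (Gamma : R -> X -> Prop)
  (phi : R -> X -> X) (U : X -> Prop) : Prop :=
  exists d : Ue Gamma phi U -> Ue Gamma phi U -> R,
    is_metric d /\ forall W, Ue_open Gamma phi U W <-> metric_open d W.

(* Main.v *)
Require Import Defs.
From Stdlib Require Import Reals Lra List Relations Classical ClassicalEpsilon FunctionalExtensionality PropExtensionality ProofIrrelevance.
Open Scope R_scope.

Lemma list_min {A : Type} (l : list A) (g : A -> R) :
  (forall a, In a l -> 0 < g a) -> exists d, 0 < d /\ forall a, In a l -> d <= g a.
Proof.
  induction l as [|a l IH]; intros H.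
  - exists 1; split; [lra| intros a []].
  - destruct IH as [d [Hd Hd']]. { intros b Hb; apply H; right; exact Hb. }
    exists (Rmin d (g a)); split.
    + apply Rmin_glb_lt; [lra| apply H; left; reflexivity].
    + intros b [<-|Hb]; [apply Rmin_r|]. eapply Rle_trans; [apply Rmin_l| auto].
Qed.

Lemma lebesgue (A B : R) (P : R -> R -> Prop) :
  (forall t, A <= t <= B -> exists r, 0 < r /\ P t r) ->
  exists d, 0 < d /\ forall u, A <= u <= B ->
    exists t r, A <= t <= B /\ P t r /\ Rabs (u - t) < r/2 /\ d <= r/2.
Proof.
  intros H.
  assert (H' : forall t, exists r, 0 < r /\ (A <= t <= B -> P t r)).
  { intros t. destruct (classic (A <= t <= B)) as [Ht|Ht].
    - destruct (H t Ht) as [r [Hr HP]]. exists r; auto.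
    - exists 1; split; [lra| tauto]. }
  set (rr := fun t => proj1_sig (constructive_indefinite_description _ (H' t))).
  assert (Hrr : forall t, 0 < rr t /\ (A <= t <= B -> P t (rr t))).
  { intros t. unfold rr. destruct (constructive_indefinite_description _ (H' t)); simpl; auto. }
  assert (cf : forall t, (exists u, (A <= t <= B /\ Rabs (u - t) < rr t / 2)) -> A <= t <= B).
  { intros t [u [Hu _]]; exact Hu. }
  set (fam := mkfamily (fun t => A <= t <= B) (fun t u => A <= t <= B /\ Rabs (u - t) < rr t / 2) cf).
  destruct (compact_P3 A B fam) as [D [Hcov Hfin]].
  - split.
    + intros u Hu. exists u. simpl. split; [exact Hu|].
      replace (u - u) with 0 by ring. rewrite Rabs_R0. destruct (Hrr u); lra.
    + intros t u [Ht Hu].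
      assert (Hp : 0 < rr t / 2 - Rabs (u - t)) by lra.
      exists (mkposreal _ Hp). intros v Hv. unfold disc in Hv; simpl in Hv. simpl. split; [exact Ht|].
      pose proof (Rabs_triang (v - u) (u - t)). replace (v - u + (u - t)) with (v - t) in H0 by ring. lra.
  - destruct Hfin as [l Hl].
    destruct (list_min l (fun t => rr t / 2)) as [d [Hd Hd']].
    { intros t _. destruct (Hrr t); lra. }
    exists d; split; [exact Hd|].
    intros u Hu. destruct (Hcov u Hu) as [t [[Ht Htu] HD]].
    exists t, (rr t). split; [exact Ht|]. split; [apply Hrr; exact Ht|]. split; [exact Htu|].
    apply Hd'. apply Hl. simpl. split; assumption.
Qed.

Lemma cone_tri h1 h2 h3 d12 d23 d13 : 0<=h1 -> 0<=h2 -> 0<=h3 -> 0<=d12 -> 0<=d23 -> d13 <= d12+d23 ->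
  Rabs(h1-h3) + Rmin (Rmin h1 h3) d13 <=
  (Rabs (h1-h2) + Rmin (Rmin h1 h2) d12) + (Rabs(h2-h3) + Rmin (Rmin h2 h3) d23).
Proof.
  intros.
  assert (Rmin (Rmin h1 h3) d13 <= h1) by (eapply Rle_trans; [apply Rmin_l| apply Rmin_l]).
  assert (Rmin (Rmin h1 h3) d13 <= h3) by (eapply Rle_trans; [apply Rmin_l| apply Rmin_r]).
  assert (Rmin (Rmin h1 h3) d13 <= d13) by apply Rmin_r.
  revert H5 H6 H7. generalize (Rmin (Rmin h1 h3) d13). intros m Hm1 Hm3 Hmd.
  unfold Rmin; repeat destruct Rle_dec; unfold Rabs; repeat destruct Rcase_abs; lra.
Qed.

Section Main.
Variables (X : MetricSpace) (Gamma : R -> X -> Prop) (phi : R -> X -> X) (U : X -> Prop).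
Hypothesis PF : partial_flow Gamma phi.

Lemma dist_refl x : Defs.dist X x x = 0.
Proof. apply Defs.dist_eq0; reflexivity. Qed.
Lemma dist_nn x y : 0 <= Defs.dist X x y.
Proof. pose proof (Defs.dist_tri X x y x). rewrite dist_refl, (Defs.dist_sym X y x) in H. lra. Qed.

Lemma G_open : open_RX Gamma.
Proof. apply PF. Qed.
Lemma phi_cont : forall t x, Gamma t x -> forall eps, 0 < eps -> exists delta, 0 < delta /\
     forall s y, Gamma s y -> Rabs (s - t) < delta -> Defs.dist X x y < delta ->
       Defs.dist X (phi t x) (phi s y) < eps.
Proof. apply PF. Qed.
Lemma G0 x : Gamma 0 x.
Proof. apply PF. Qed.
Lemma G_int x s t u : Gamma s x -> Gamma t x -> s <= u <= t -> Gamma u x.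
Proof. apply PF. Qed.
Lemma G_btw x a b u : Gamma a x -> Gamma b x -> (a <= u <= b \/ b <= u <= a) -> Gamma u x.
Proof. intros Ha Hb [H|H]; [exact (G_int x a b u Ha Hb H) | exact (G_int x b a u Hb Ha H)]. Qed.
Lemma G_shift t x : Gamma t x -> forall s, Gamma s (phi t x) <-> Gamma (s + t) x.
Proof. apply PF. Qed.
Lemma phi0 x : phi 0 x = x.
Proof. apply PF. Qed.
Lemma phi_comp_w s t x : Gamma s x -> Gamma t x -> Gamma (s + t) x -> phi s (phi t x) = phi (s + t) x.
Proof. apply PF. Qed.

Lemma G_small x : exists e, 0 < e /\ forall s, Rabs s < e -> Gamma s x.
Proof.
  destruct (G_open 0 x (G0 x)) as [e [He H]]. exists e; split; auto.
  intros s Hs. apply H. rewrite Rminus_0_r; auto. rewrite dist_refl; auto.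
Qed.

Lemma comp s t x : Gamma t x -> Gamma (s + t) x -> phi s (phi t x) = phi (s + t) x.
Proof.
  destruct (G_small x) as [e0 [He0 Hs0]].
  set (e := e0 / 2).
  assert (Hc : forall n s t, Gamma t x -> Gamma (s + t) x -> Rabs s <= INR n * e ->
            phi s (phi t x) = phi (s + t) x).
  { induction n as [|n IH]; intros s' t' Ht Hst Hn.
    - simpl in Hn. assert (s' = 0) by (pose proof (Rabs_pos s'); destruct (Rcase_abs s'); [rewrite Rabs_left in Hn by lra | rewrite Rabs_right in Hn by lra]; lra).
      subst s'. rewrite phi0, Rplus_0_l. reflexivity.
    - rewrite S_INR in Hn.
      destruct (Rle_dec (Rabs s') e) as [Hle|Hgt].
      + apply phi_comp_w; auto. apply Hs0. unfold e in Hle; lra.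
      + apply Rnot_le_lt in Hgt. assert (Hepos : 0 < e) by (unfold e; lra). set (s2 := if Rle_dec 0 s' then e else - e).
        set (s1 := s' - s2).
        assert (Hs2 : Rabs s2 < e0).
        { unfold s2; destruct Rle_dec; [rewrite Rabs_right|rewrite Rabs_Ropp, Rabs_right]; unfold e; lra. }
        assert (Hb : (0 <= s2 <= s' \/ s' <= s2 <= 0) /\ (0 <= s1 <= s' \/ s' <= s1 <= 0)
                      /\ Rabs s1 <= INR n * e).
        { unfold s1, s2; destruct Rle_dec as [Hp|Hp]; [|apply Rnot_le_lt in Hp].
          - rewrite Rabs_right in Hgt, Hn by lra. split; [left; lra|split; [left; lra|]].
            rewrite Rabs_right by lra. lra.
          - rewrite Rabs_left in Hgt, Hn by lra. split; [right; lra|split; [right; lra|]].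
            rewrite Rabs_left by lra. lra. }
        destruct Hb as [B2 [B1 Hn1]].
        assert (G2 : Gamma (s2 + t') x).
        { apply (G_btw x t' (s' + t')); auto. destruct B2; [left|right]; lra. }
        assert (E1 : phi s2 (phi t' x) = phi (s2 + t') x).
        { apply phi_comp_w; auto. }
        assert (Gy : forall u, (0 <= u <= s' \/ s' <= u <= 0) -> Gamma u (phi t' x)).
        { intros u Hu. apply (G_shift t' x Ht). apply (G_btw x t' (s' + t')); auto.
          destruct Hu; [left|right]; lra. }
        assert (E2 : phi s1 (phi s2 (phi t' x)) = phi (s1 + s2) (phi t' x)).
        { apply phi_comp_w; auto. replace (s1 + s2) with s' by (unfold s1; ring).
          apply Gy. lra. }
        replace s' with (s1 + s2) by (unfold s1; ring). rewrite <- E2, E1.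
        replace (s1 + s2 + t') with (s1 + (s2 + t')) by ring.
        apply IH; auto. replace (s1 + (s2 + t')) with (s' + t') by (unfold s1; ring). auto. }
  intros Ht Hst.
  assert (He : e > 0) by (unfold e; lra).
  destruct (INR_archimed e (Rabs s) He) as [n Hn].
  apply (Hc n); auto. lra.
Qed.

Lemma G_shift' t x s : Gamma t x -> Gamma (s + t) x -> Gamma s (phi t x).
Proof. intros H1 H2. apply (G_shift t x H1). auto. Qed.

Ltac dRle := repeat match goal with
  | |- context[Rle_dec ?a ?b] => destruct (Rle_dec a b)
  | H : context[Rle_dec ?a ?b] |- _ => destruct (Rle_dec a b) end.

Lemma J_iff t s : J t s <-> Rmin 0 t <= s <= Rmax 0 t.
Proof.
  unfold J, Rmin, Rmax. dRle; split; intros; lra.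
Qed.
Lemma J0 t : J t 0.
Proof. apply J_iff. unfold Rmin, Rmax; dRle; lra. Qed.
Lemma Jt t : J t t.
Proof. apply J_iff. unfold Rmin, Rmax; dRle; lra. Qed.
Lemma J_split t1 t2 s : J (t1 + t2) s -> J t1 s \/ J t2 (s - t1).
Proof.
  rewrite !J_iff. unfold Rmin, Rmax. intros H. dRle;
  destruct (Rle_dec s t1); destruct (Rle_dec 0 s); try (left; lra); try (right; lra).
Qed.

Definition gU := GammaU Gamma phi U.

Lemma gen_refl p : env_gen Gamma phi U p p.
Proof.
  destruct p as [r [x Hx]]. unfold env_gen; simpl. replace (r - r) with 0 by ring.
  rewrite phi0. split; auto. split; auto. intros s Hs. apply J_iff in Hs.
  unfold Rmin, Rmax in Hs; dRle; try lra.
  assert (s = 0) by lra. subst. rewrite phi0. split; auto. apply G0.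
Qed.

Lemma gen_sym p q : env_gen Gamma phi U p q -> env_gen Gamma phi U q p.
Proof.
  destruct p as [r [x Hx]], q as [s [y Hy]]. unfold env_gen, GammaU; simpl.
  set (t := r - s). intros [[_ HJ] Ey]. subst y.
  destruct (HJ t (Jt t)) as [Gt _].
  replace (s - r) with (- t) by (unfold t; ring).
  split; [split; [exact Hy|]|].
  - intros s' Hs'.
    assert (J t (s' + t)) by (rewrite J_iff in *; unfold Rmin, Rmax in *; dRle; lra).
    destruct (HJ _ H) as [G1 U1]. split.
    + apply G_shift'; auto.
    + rewrite comp; auto.
  - rewrite comp; auto. replace (- t + t) with 0 by ring. rewrite phi0; reflexivity.
    replace (- t + t) with 0 by ring. apply G0.
Qed.

Lemma gen_trans p q w : env_gen Gamma phi U p q -> env_gen Gamma phi U q w -> env_gen Gamma phi U p w.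
Proof.
  destruct p as [r [x Hx]], q as [s [y Hy]], w as [u [z Hz]]. unfold env_gen, GammaU; simpl.
  intros [[_ HJ1] Ey] [[_ HJ2] Ez]. subst y z.
  set (t1 := r - s) in *. set (t2 := s - u) in *.
  destruct (HJ1 t1 (Jt t1)) as [G1 _].
  destruct (HJ2 t2 (Jt t2)) as [G2 _].
  apply (G_shift t1 x G1) in G2.
  replace (r - u) with (t1 + t2) by (unfold t1, t2; ring).
  split; [split; [exact Hx|]|].
  - intros s' Hs'. destruct (J_split t1 t2 s' Hs') as [H|H]; [apply HJ1; auto|].
    destruct (HJ2 _ H) as [G3 U3]. apply (G_shift t1 x G1) in G3.
    replace (s' - t1 + t1) with s' in G3 by ring.
    split; auto. rewrite comp in U3; auto.
    replace (s' - t1 + t1) with s' in U3 by ring. auto.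
    replace (s' - t1 + t1) with s' by ring. auto.
  - rewrite comp; auto. f_equal; ring.
Qed.

Lemma equiv_gen p q : env_equiv Gamma phi U p q <-> env_gen Gamma phi U p q.
Proof.
  split.
  - induction 1.
    + auto.
    + apply gen_refl.
    + apply gen_sym; auto.
    + eapply gen_trans; eauto.
  - intros H. apply rst_step. exact H.
Qed.

Hypothesis HUo : mopen U.

Definition hset x r := 0 <= r <= 1 /\ forall y, Defs.dist X x y < r -> U y.
Lemma hset_bound x : bound (hset x).
Proof. exists 1. intros r [Hr _]; lra. Qed.
Lemma hset_ne x : exists r, hset x r.
Proof. exists 0. split; [lra|]. intros y Hy. pose proof (dist_nn x y); lra. Qed.
Definition hf x := proj1_sig (completeness (hset x) (hset_bound x) (hset_ne x)).
Lemma hf_lub x : is_lub (hset x) (hf x).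
Proof. unfold hf; destruct completeness; simpl; auto. Qed.
Lemma hf_bounds x : 0 <= hf x <= 1.
Proof.
  destruct (hf_lub x) as [H1 H2]. split.
  - apply H1. split; [lra|]. intros y Hy. pose proof (dist_nn x y); lra.
  - apply H2. intros r [Hr _]; lra.
Qed.
Lemma hf_pos x : U x -> 0 < hf x.
Proof.
  intros Hx. destruct (HUo x Hx) as [e [He H]].
  destruct (hf_lub x) as [H1 _].
  assert (Hm : 0 < Rmin e 1) by (apply Rmin_glb_lt; lra).
  assert (hset x (Rmin e 1)).
  { split. split; [lra|apply Rmin_r].
    intros y Hy. apply H. eapply Rlt_le_trans; [exact Hy| apply Rmin_l]. }
  apply H1 in H0. lra.
Qed.
Lemma hf_U x : 0 < hf x -> U x.
Proof.
  intros Hp. destruct (classic (U x)) as [|Hn]; auto. exfalso.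
  destruct (hf_lub x) as [_ H2].
  assert (hf x <= 0); [|lra].
  apply H2. intros r [Hr Hy]. destruct (Rle_dec r 0); auto.
  exfalso. apply Hn, Hy. rewrite dist_refl. lra.
Qed.
Lemma hf_lip1 x y : hf x <= hf y + Defs.dist X x y.
Proof.
  destruct (hf_lub x) as [_ H2]. apply H2. intros r [Hr Hz].
  pose proof (hf_bounds y). destruct (Rle_dec r (Defs.dist X x y)); [lra|].
  destruct (hf_lub y) as [H1 _].
  assert (hset y (r - Defs.dist X x y)).
  { split. pose proof (dist_nn x y); lra.
    intros z Hz'. apply Hz. pose proof (Defs.dist_tri X x y z). lra. }
  apply H1 in H0. lra.
Qed.
Lemma hf_lip x y : Rabs (hf x - hf y) <= Defs.dist X x y.
Proof.
  pose proof (hf_lip1 x y). pose proof (hf_lip1 y x). rewrite Defs.dist_sym in H0.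
  unfold Rabs; destruct Rcase_abs; lra.
Qed.

Definition hv (o : option X) := match o with Some x => hf x | None => 0 end.
Definition md (o o' : option X) := match o, o' with
  | Some x, Some y => Rmin (Rmin (hf x) (hf y)) (Defs.dist X x y) | _, _ => 0 end.
Definition Del o o' := Rabs (hv o - hv o') + md o o'.

Lemma hv_nn o : 0 <= hv o.
Proof. destruct o; simpl; [apply hf_bounds|lra]. Qed.
Lemma md_nn o o' : 0 <= md o o'.
Proof.
  destruct o, o'; simpl; try lra. pose proof (hf_bounds c). pose proof (hf_bounds c0).
  pose proof (dist_nn c c0). unfold Rmin; dRle; lra.
Qed.
Lemma md_le o o' : md o o' <= hv o /\ md o o' <= hv o'.
Proof.
  destruct o, o'; simpl; try (pose proof (hv_nn (Some c)); simpl in *; lra); try lra.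
  split; (eapply Rle_trans; [apply Rmin_l|]); [apply Rmin_l|apply Rmin_r].
Qed.
Lemma Del_nn o o' : 0 <= Del o o'.
Proof. unfold Del. pose proof (Rabs_pos (hv o - hv o')). pose proof (md_nn o o'). lra. Qed.
Lemma Del_le2 o o' : Del o o' <= 2.
Proof.
  unfold Del. destruct (md_le o o'). pose proof (hv_nn o). pose proof (hv_nn o').
  assert (hv o <= 1) by (destruct o; simpl; [apply hf_bounds|lra]).
  assert (hv o' <= 1) by (destruct o'; simpl; [apply hf_bounds|lra]).
  unfold Rabs; destruct Rcase_abs; lra.
Qed.
Lemma Del_sym o o' : Del o o' = Del o' o.
Proof.
  unfold Del. rewrite Rabs_minus_sym. f_equal. destruct o, o'; simpl; auto.
  rewrite Defs.dist_sym, (Rmin_comm (hf c)). reflexivity.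
Qed.
Lemma Del_refl o : Del o o = 0.
Proof.
  unfold Del. replace (hv o - hv o) with 0 by ring. rewrite Rabs_R0.
  destruct o; simpl; [|lra]. rewrite dist_refl. pose proof (hf_bounds c).
  unfold Rmin; dRle; lra.
Qed.
Lemma Del_tri o1 o2 o3 : Del o1 o3 <= Del o1 o2 + Del o2 o3.
Proof.
  unfold Del.
  destruct o1 as [x1|], o2 as [x2|], o3 as [x3|]; simpl;
  try (pose proof (hf_bounds x1)); try (pose proof (hf_bounds x2)); try (pose proof (hf_bounds x3)).
  - apply cone_tri; try apply dist_nn; try apply hf_bounds; apply Defs.dist_tri.
  - pose proof (md_nn (Some x1) (Some x2)); simpl in *.
    unfold Rabs; repeat destruct Rcase_abs; lra.
  - assert (Rmin (Rmin (hf x1) (hf x3)) (Defs.dist X x1 x3) <= hf x1) by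
      (eapply Rle_trans; [apply Rmin_l| apply Rmin_l]).
    assert (Rmin (Rmin (hf x1) (hf x3)) (Defs.dist X x1 x3) <= hf x3) by
      (eapply Rle_trans; [apply Rmin_l| apply Rmin_r]).
    unfold Rabs; repeat destruct Rcase_abs; lra.
  - unfold Rabs; repeat destruct Rcase_abs; lra.
  - pose proof (md_nn (Some x2) (Some x3)); simpl in *.
    unfold Rabs; repeat destruct Rcase_abs; lra.
  - pose proof (dist_nn x2 x2). unfold Rabs; repeat destruct Rcase_abs; lra.
  - unfold Rabs; repeat destruct Rcase_abs; lra.
  - unfold Rabs; repeat destruct Rcase_abs; lra.
Qed.

Definition K (x : X) (t : R) : option X :=
  if excluded_middle_informative (gU t x) then Some (phi t x) else None.

Definition UE := Ue Gamma phi U.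
Definition cls := env_cls Gamma phi U.

Definition rep (C : UE) (b : R) : option X :=
  match excluded_middle_informative (exists y : sub U, proj1_sig C (b, y)) with
  | left H => Some (proj1_sig (proj1_sig (constructive_indefinite_description _ H)))
  | right _ => None end.

Lemma gU_U t x : gU t x -> U (phi t x).
Proof. intros [_ H]. apply (H t (Jt t)). Qed.
Lemma gU_G t x : gU t x -> Gamma t x.
Proof. intros [_ H]. apply (H t (Jt t)). Qed.
Lemma gU0 x : U x -> gU 0 x.
Proof.
  intros Hx. split; auto. intros s Hs. apply J_iff in Hs. unfold Rmin, Rmax in Hs; dRle; try lra.
  assert (s = 0) by lra. subst. rewrite phi0. split; auto. apply G0.
Qed.

Lemma rep_cls a x b : rep (cls (a, x)) b = K (proj1_sig x) (a - b).
Proof.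
  unfold rep, K. simpl.
  destruct excluded_middle_informative as [H|H].
  - destruct constructive_indefinite_description as [y Hy]. simpl.
    apply equiv_gen in Hy. destruct Hy as [Hg Hy]. simpl in Hg, Hy.
    destruct excluded_middle_informative as [_|Hn]; [rewrite Hy; reflexivity| contradiction].
  - destruct excluded_middle_informative as [Hg|_]; auto.
    exfalso. apply H. exists (exist _ (phi (a - b) (proj1_sig x)) (gU_U _ _ Hg)).
    apply equiv_gen. split; simpl; auto.
Qed.

Lemma rep_Some C b x : rep C b = Some x -> exists y, proj1_sig C (b, y) /\ proj1_sig y = x.
Proof.
  unfold rep. destruct excluded_middle_informative as [H|H]; [|discriminate].
  destruct constructive_indefinite_description as [y Hy]; simpl. intros E; inversion E.
  exists y; auto.
Qed.

Lemma Ue_rep (C : UE) : exists p, C = cls p.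
Proof.
  destruct C as [P [p Hp]]. exists p. subst P. unfold cls, env_cls. f_equal.
Qed.

Lemma sig_eq_P (P Q : R * sub U -> Prop) H1 H2 : P = Q ->
  exist (fun C => exists p, C = env_equiv Gamma phi U p) P H1 = exist _ Q H2.
Proof. intros E; subst Q. f_equal. apply proof_irrelevance. Qed.

Lemma cls_eq p q : env_equiv Gamma phi U p q -> cls p = cls q.
Proof.
  intros H. unfold cls, env_cls. apply sig_eq_P.
  apply functional_extensionality. intros z. apply propositional_extensionality.
  apply equiv_gen in H. rewrite !equiv_gen. split; intros H'.
  - eapply gen_trans; [apply gen_sym; exact H| exact H'].
  - eapply gen_trans; [exact H| exact H'].
Qed.

Lemma C_cls (C : UE) p : proj1_sig C p -> C = cls p.
Proof.
  intros H. destruct (Ue_rep C) as [q ->]. apply cls_eq. exact H.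
Qed.

Definition w (b : R) := / (1 + Rabs b).
Lemma w_pos b : 0 < w b.
Proof. unfold w. apply Rinv_0_lt_compat. pose proof (Rabs_pos b). lra. Qed.
Lemma w_le1 b : w b <= 1.
Proof.
  unfold w. pose proof (Rabs_pos b). rewrite <- Rinv_1. apply Rinv_le_contravar; lra.
Qed.

Definition dset (C C' : UE) v := exists b, v = w b * Del (rep C b) (rep C' b).
Lemma dset_bound C C' : bound (dset C C').
Proof.
  exists 2. intros v [b ->]. pose proof (w_pos b). pose proof (w_le1 b).
  pose proof (Del_le2 (rep C b) (rep C' b)). pose proof (Del_nn (rep C b) (rep C' b)). nra.
Qed.
Lemma dset_ne C C' : exists v, dset C C' v.
Proof. exists (w 0 * Del (rep C 0) (rep C' 0)). exists 0; reflexivity. Qed.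
Definition dm C C' := proj1_sig (completeness (dset C C') (dset_bound C C') (dset_ne C C')).
Lemma dm_ge C C' b : w b * Del (rep C b) (rep C' b) <= dm C C'.
Proof. unfold dm; destruct completeness as [m [H1 H2]]; simpl. apply H1. exists b; auto. Qed.
Lemma dm_le C C' M : (forall b, w b * Del (rep C b) (rep C' b) <= M) -> dm C C' <= M.
Proof. intros H. unfold dm; destruct completeness as [m [H1 H2]]; simpl. apply H2. intros v [b ->]; auto. Qed.

Lemma dm_metric : is_metric dm.
Proof.
  split; [|split].
  - intros C C'. split.
    + intros H0.
      assert (HD : forall b, Del (rep C b) (rep C' b) = 0).
      { intros b. pose proof (dm_ge C C' b). pose proof (w_pos b).
        pose proof (Del_nn (rep C b) (rep C' b)). rewrite H0 in H.
        destruct (Rle_lt_or_eq_dec _ _ H2); auto. nra. }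
      destruct (Ue_rep C) as [[a x] ->].
      specialize (HD a). rewrite rep_cls in HD. replace (a - a) with 0 in HD by ring.
      unfold K in HD. destruct excluded_middle_informative as [_|Hn];
        [|exfalso; apply Hn, gU0, (proj2_sig x)].
      rewrite phi0 in HD.
      destruct (rep C' a) as [x'|] eqn:Er.
      * unfold Del in HD. simpl in HD.
        pose proof (Rabs_pos (hf (proj1_sig x) - hf x')) as Q1.
        pose proof (md_nn (Some (proj1_sig x)) (Some x')) as Q2. simpl in Q2.
        pose proof (hf_pos _ (proj2_sig x)) as Q3.
        assert (E1 : Rabs (hf (proj1_sig x) - hf x') = 0) by lra.
        assert (E2 : Rmin (Rmin (hf (proj1_sig x)) (hf x')) (Defs.dist X (proj1_sig x) x') = 0) by lra.
        assert (hf x' = hf (proj1_sig x)).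
        { destruct (Rcase_abs (hf (proj1_sig x) - hf x')) as [Hc|Hc];
          [rewrite Rabs_left in E1 by lra | rewrite Rabs_right in E1 by lra]; lra. }
        assert (Dz : Defs.dist X (proj1_sig x) x' = 0).
        { pose proof (dist_nn (proj1_sig x) x'). revert E2. rewrite H. unfold Rmin; dRle; intros; lra. }
        apply Defs.dist_eq0 in Dz.
        destruct (rep_Some _ _ _ Er) as [y [Hy Ey]].
        rewrite (C_cls C' _ Hy). f_equal. f_equal. destruct x, y; simpl in *. subst.
        f_equal; apply proof_irrelevance.
      * unfold Del in HD; simpl in HD. pose proof (hf_pos _ (proj2_sig x)).
        rewrite Rminus_0_r, Rabs_right in HD by lra. lra.
    + intros ->. apply Rle_antisym.
      * apply dm_le. intros b. rewrite Del_refl. lra.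
      * pose proof (dm_ge C' C' 0). rewrite Del_refl in H. lra.
  - intros C C'. apply Rle_antisym; apply dm_le; intros b; rewrite Del_sym; apply dm_ge.
  - intros C1 C2 C3. apply dm_le. intros b.
    pose proof (dm_ge C1 C2 b). pose proof (dm_ge C2 C3 b). pose proof (w_pos b).
    pose proof (Del_tri (rep C1 b) (rep C2 b) (rep C3 b)). nra.
Qed.

Lemma Del_SS_le a b : Del (Some a) (Some b) <= 2 * Defs.dist X a b.
Proof.
  unfold Del; simpl. pose proof (hf_lip a b). pose proof (Rmin_r (Rmin (hf a) (hf b)) (Defs.dist X a b)). lra.
Qed.
Lemma Del_NS a : Del None (Some a) = hf a.
Proof. unfold Del; simpl. rewrite Rminus_0_l, Rabs_Ropp, Rabs_right; [ring|]. apply Rle_ge, hf_bounds. Qed.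

Lemma to_mopen W : Ue_open Gamma phi U W -> metric_open dm W.
Proof.
  intros HW C HC. destruct (Ue_rep C) as [[a0 x0] ->].
  destruct (HW (a0, x0) HC) as [eps [Heps Hq]].
  set (h0 := hf (proj1_sig x0)).
  assert (Hh0 : 0 < h0) by (apply hf_pos, (proj2_sig x0)).
  set (m := Rmin (h0/2) eps).
  assert (Hm : 0 < m) by (apply Rmin_glb_lt; lra).
  exists (w a0 * m). split; [pose proof (w_pos a0); nra|].
  intros C' Hd. pose proof (dm_ge (cls (a0, x0)) C' a0) as Hg.
  assert (HD : Del (rep (cls (a0, x0)) a0) (rep C' a0) < m).
  { pose proof (w_pos a0). apply (Rmult_lt_reg_l (w a0)); auto. lra. }
  rewrite rep_cls in HD. replace (a0 - a0) with 0 in HD by ring.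
  unfold K in HD. destruct excluded_middle_informative as [_|Hn];
    [|exfalso; apply Hn, gU0, (proj2_sig x0)].
  rewrite phi0 in HD.
  assert (m <= h0/2) by apply Rmin_l. assert (m <= eps) by apply Rmin_r.
  destruct (rep C' a0) as [x'|] eqn:Er.
  - destruct (rep_Some _ _ _ Er) as [y [Hy Ey]].
    rewrite (C_cls C' _ Hy).
    assert (Hdist : Defs.dist X (proj1_sig x0) x' < eps).
    { unfold Del in HD; simpl in HD. fold h0 in HD.
      pose proof (hf_bounds x').
      revert HD. unfold Rmin at 1 2; dRle; unfold Rabs; destruct Rcase_abs; intros; lra. }
    apply (Hq (a0, y)); simpl.
    + replace (a0 - a0) with 0 by ring. rewrite Rabs_R0; lra.
    + rewrite Ey; auto.
  - unfold Del in HD; simpl in HD. fold h0 in HD.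
    rewrite Rminus_0_r, Rabs_right in HD by lra. lra.
Qed.

Lemma UC_of_PC x0 : U x0 ->
  (forall t0 eps, 0 < eps -> exists delta, 0 < delta /\ forall y t, U y ->
     Rabs (t - t0) < delta -> Defs.dist X x0 y < delta -> Del (K x0 t0) (K y t) < eps) ->
  forall A B eps, 0 < eps -> exists delta, 0 < delta /\ forall t0 y t, A <= t0 <= B -> U y ->
     Rabs (t - t0) < delta -> Defs.dist X x0 y < delta -> Del (K x0 t0) (K y t) < eps.
Proof.
  intros Ux0 HP A B eps Heps.
  destruct (lebesgue A B (fun t r => forall y s, U y -> Rabs (s - t) < r -> Defs.dist X x0 y < r ->
      Del (K x0 t) (K y s) < eps / 2)) as [d [Hd Hl]].
  { intros t _. apply HP. lra. }
  exists d; split; auto.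
  intros t0 y t Ht0 Hy Ht Hdy.
  destruct (Hl t0 Ht0) as [s [r [_ [HPs [Hs Hdr]]]]].
  assert (H1 : Del (K x0 s) (K y t) < eps/2).
  { apply HPs; auto. pose proof (Rabs_triang (t - t0) (t0 - s)) as Q.
    replace (t - t0 + (t0 - s)) with (t - s) in Q by ring. lra. lra. }
  assert (H2 : Del (K x0 s) (K x0 t0) < eps/2).
  { apply HPs; auto. lra. rewrite dist_refl. lra. }
  pose proof (Del_tri (K x0 t0) (K x0 s) (K y t)). rewrite Del_sym in H2. lra.
Qed.

Lemma from_mopen W :
  (forall x0, U x0 -> forall t0 eps, 0 < eps -> exists delta, 0 < delta /\ forall y t, U y ->
     Rabs (t - t0) < delta -> Defs.dist X x0 y < delta -> Del (K x0 t0) (K y t) < eps) ->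
  metric_open dm W -> Ue_open Gamma phi U W.
Proof.
  intros HPC HW [a0 x0] Hp.
  destruct (HW _ Hp) as [eps [Heps Hb]].
  set (T := 4 / eps).
  destruct (UC_of_PC (proj1_sig x0) (proj2_sig x0) (HPC _ (proj2_sig x0)) (a0 - T) (a0 + T) (eps/2))
    as [d [Hd Hu]]; [lra|].
  exists d. split; auto. intros [a y] Ha Hy. simpl in Ha, Hy.
  apply Hb. change (dm (cls (a0, x0)) (cls (a, y)) < eps). assert (dm (cls (a0, x0)) (cls (a, y)) <= eps / 2); [|lra].
  apply dm_le. intros b. rewrite !rep_cls. simpl.
  pose proof (w_pos b) as Hw. pose proof (w_le1 b).
  pose proof (Del_nn (K (proj1_sig x0) (a0 - b)) (K (proj1_sig y) (a - b))) as Hn.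
  destruct (Rle_dec (Rabs b) T) as [Hbt|Hbt].
  - assert (Del (K (proj1_sig x0) (a0 - b)) (K (proj1_sig y) (a - b)) < eps/2).
    { apply Hu; auto.
      - unfold Rabs in Hbt; destruct Rcase_abs in Hbt; lra.
      - apply (proj2_sig y).
      - replace (a - b - (a0 - b)) with (a - a0) by ring. auto. }
    nra.
  - pose proof (Del_le2 (K (proj1_sig x0) (a0 - b)) (K (proj1_sig y) (a - b))).
    assert (w b * 2 <= eps / 2).
    { unfold w. apply Rnot_le_lt in Hbt. unfold T in Hbt.
      assert (0 < 1 + Rabs b) by (pose proof (Rabs_pos b); lra).
      apply (Rmult_le_reg_r (1 + Rabs b)); auto.
      rewrite Rmult_assoc, (Rmult_comm 2), <- Rmult_assoc, Rinv_l by lra.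
      assert (4 / eps * eps = 4) by (field; lra).
      assert (4 < Rabs b * eps) by (apply (Rmult_lt_compat_r eps) in Hbt; lra). nra. }
    nra.
Qed.

Hypothesis HC : phi_convex Gamma phi U.
Hypothesis HK : mcompact (mclosure U).

Lemma U1 : exists e1, 0 < e1 /\ forall y, mclosure U y -> forall s, Rabs s < e1 -> Gamma s y.
Proof.
  set (r := fun z => proj1_sig (constructive_indefinite_description _ (G_open 0 z (G0 z)))).
  assert (Hr : forall z, 0 < r z /\ forall s y, Rabs (s - 0) < r z -> Defs.dist X z y < r z -> Gamma s y).
  { intros z. unfold r. destruct constructive_indefinite_description; simpl; auto. }
  destruct (HK X (fun z y => Defs.dist X z y < r z)) as [l Hl].
  - intros z y Hy. exists (r z - Defs.dist X z y). split; [lra|].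
    intros y' Hy'. pose proof (Defs.dist_tri X z y y'). lra.
  - intros y _. exists y. rewrite dist_refl. apply Hr.
  - destruct (list_min l r) as [e [He He']]. { intros a _; apply Hr. }
    exists e. split; auto. intros y Hy s Hs.
    destruct (Hl y Hy) as [z [Hz Hzy]].
    apply (proj2 (Hr z) s y); auto. rewrite Rminus_0_r. specialize (He' z Hz). lra.
Qed.

Lemma clamp t t0 s : J t s -> exists s', J t0 s' /\ Rabs (s - s') <= Rabs (t - t0).
Proof.
  intros H. rewrite J_iff in H.
  destruct (Rle_dec (Rmin 0 t0) s), (Rle_dec s (Rmax 0 t0));
  [exists s | exists (Rmax 0 t0) | exists (Rmin 0 t0) | exists s];
  (split; [apply J_iff|]);
  unfold Rmin, Rmax in *; unfold Rabs; dRle; repeat destruct Rcase_abs; lra.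
Qed.

Lemma tube t0 x0 : gU t0 x0 -> exists delta, 0 < delta /\ forall y t,
  Rabs (t - t0) < delta -> Defs.dist X x0 y < delta -> gU t y.
Proof.
  intros [Ux0 Hg].
  destruct (lebesgue (Rmin 0 t0) (Rmax 0 t0) (fun s r => forall s' y, Rabs (s' - s) < r ->
      Defs.dist X x0 y < r -> Gamma s' y /\ U (phi s' y))) as [d [Hd Hl]].
  { intros s Hs. apply J_iff in Hs. destruct (Hg s Hs) as [Gs Us].
    destruct (HUo _ Us) as [rho [Hrho Hrho']].
    destruct (phi_cont s x0 Gs rho Hrho) as [dc [Hdc Hc]].
    destruct (G_open s x0 Gs) as [r' [Hr' Hr'']].
    exists (Rmin dc r'). split; [apply Rmin_glb_lt; auto|].
    intros s' y Hs' Hy. assert (Rmin dc r' <= dc) by apply Rmin_l.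
    assert (Rmin dc r' <= r') by apply Rmin_r.
    assert (G' : Gamma s' y) by (apply Hr''; lra).
    split; auto. apply Hrho'. apply Hc; auto; lra. }
  exists d. split; auto. intros y t Ht Hy.
  assert (Hall : forall s, J t s -> Gamma s y /\ U (phi s y)).
  { intros s Hs. destruct (clamp t t0 s Hs) as [s1 [Hs1 Hss]].
    apply J_iff in Hs1. destruct (Hl s1 Hs1) as [s2 [r [_ [HP [H1 H2]]]]].
    apply HP. pose proof (Rabs_triang (s - s1) (s1 - s2)) as Q.
    replace (s - s1 + (s1 - s2)) with (s - s2) in Q by ring. lra. lra. }
  split; auto. destruct (Hall 0 (J0 t)) as [_ Uy]. rewrite phi0 in Uy. auto.
Qed.

Lemma stepping t0 x0 : (forall s, J t0 s -> Gamma s x0 -> mclosure U (phi s x0)) ->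
  forall s, J t0 s -> Gamma s x0.
Proof.
  intros Hcl. destruct U1 as [e1 [He1 HU1]]. set (e := e1 / 2).
  assert (He : 0 < e) by (unfold e; lra).
  assert (Hn : forall n s, J t0 s -> Rabs s <= INR n * e -> Gamma s x0).
  { induction n as [|n IH]; intros s Hs Hsn.
    - simpl in Hsn. assert (s = 0) by (pose proof (Rabs_pos s); destruct (Rcase_abs s);
        [rewrite Rabs_left in Hsn by lra | rewrite Rabs_right in Hsn by lra]; lra).
      subst; apply G0.
    - rewrite S_INR in Hsn. destruct (Rle_dec (Rabs s) (INR n * e)) as [Hle|Hgt]; [apply IH; auto|].
      apply Rnot_le_lt in Hgt.
      pose proof (pos_INR n).
      destruct (Rle_dec (Rabs s) e) as [Hse|Hse].
      { pose proof (Hcl 0 (J0 t0) (G0 x0)) as Hc0. rewrite phi0 in Hc0.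
        apply HU1; auto. unfold e in Hse; lra. }
      apply Rnot_le_lt in Hse.
      set (s1 := if Rle_dec 0 s then s - e else s + e).
      assert (Hs1 : J t0 s1 /\ Rabs s1 <= INR n * e /\ Rabs (s - s1) < e1).
      { apply J_iff in Hs. unfold s1. destruct (Rle_dec 0 s) as [Hp|Hp].
        - rewrite Rabs_right in Hgt, Hsn, Hse by lra. split; [apply J_iff|split].
          + unfold Rmin, Rmax in *; dRle; lra.
          + rewrite Rabs_right by lra. lra.
          + replace (s - (s - e)) with e by ring. rewrite Rabs_right by lra. unfold e; lra.
        - apply Rnot_le_lt in Hp. rewrite Rabs_left in Hgt, Hsn, Hse by lra. split; [apply J_iff|split].
          + unfold Rmin, Rmax in *; dRle; lra.
          + rewrite Rabs_left by lra. lra.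
          + replace (s - (s + e)) with (- e) by ring. rewrite Rabs_Ropp, Rabs_right by lra. unfold e; lra. }
      destruct Hs1 as [J1 [N1 D1]].
      assert (G1 : Gamma s1 x0) by (apply IH; auto).
      assert (G2 : Gamma (s - s1) (phi s1 x0)) by (apply HU1; auto).
      apply (G_shift s1 x0 G1) in G2. replace (s - s1 + s1) with s in G2 by ring. auto. }
  intros s Hs. destruct (INR_archimed e (Rabs s) He) as [n Hn']. apply (Hn n); auto. lra.
Qed.

Lemma B2 t0 x0 : U x0 -> ~ gU t0 x0 -> (forall s, J t0 s -> Gamma s x0 -> mclosure U (phi s x0)) ->
  Gamma t0 x0 /\ ~ U (phi t0 x0).
Proof.
  intros Ux0 Hng Hcl.
  pose proof (stepping t0 x0 Hcl) as Hst.
  assert (Gt0 : Gamma t0 x0) by (apply Hst, Jt).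
  split; auto. intros Ut0.
  destruct (Rle_dec 0 t0) as [Hp|Hp].
  - apply Hng. split; auto. intros s Hs.
    assert (0 <= s <= t0) by (unfold J in Hs; destruct Rle_dec; [auto|contradiction]).
    split; [apply Hst; auto|].
    apply (HC t0 x0); auto.
    intros s' Hs'. apply Hcl; [unfold J; destruct Rle_dec; [auto|contradiction]|].
    apply Hst. unfold J; destruct Rle_dec; [auto|contradiction].
  - apply Rnot_le_lt in Hp.
    set (y := phi t0 x0).
    assert (Gy : Gamma (- t0) y) by (apply G_shift'; auto; replace (- t0 + t0) with 0 by ring; apply G0).
    assert (Eback : forall u, J t0 u -> phi (u - t0) y = phi u x0).
    { intros u Hu. unfold y. rewrite comp; auto. f_equal; ring.
      replace (u - t0 + t0) with u by ring. apply Hst; auto. }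
    assert (Jc : forall s, 0 <= s <= - t0 -> J t0 (s + t0)).
    { intros s Hs. unfold J; destruct Rle_dec; lra. }
    assert (Hall : forall s, 0 <= s <= - t0 -> U (phi s y)).
    { apply (HC (- t0) y); auto; try lra.
      - replace (- t0) with (0 - t0) by ring. rewrite Eback; [rewrite phi0; auto| apply J0].
      - intros s Hs. replace s with (s + t0 - t0) by ring. rewrite Eback by auto. apply Hcl; auto. }
    apply Hng. split; auto. intros s Hs.
    assert (t0 <= s <= 0) by (unfold J in Hs; destruct Rle_dec; [lra|auto]).
    split; [apply Hst; auto|].
    rewrite <- (Eback s Hs). apply Hall. lra.
Qed.

Lemma PC x0 : U x0 -> forall t0 eps, 0 < eps -> exists delta, 0 < delta /\ forall y t, U y ->
     Rabs (t - t0) < delta -> Defs.dist X x0 y < delta -> Del (K x0 t0) (K y t) < eps.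
Proof.
  intros Ux0 t0 eps Heps.
  destruct (classic (gU t0 x0)) as [Hg|Hng].
  - destruct (tube t0 x0 Hg) as [d1 [Hd1 Ht]].
    destruct (phi_cont t0 x0 (gU_G _ _ Hg) (eps/2)) as [dc [Hdc Hc]]; [lra|].
    exists (Rmin d1 dc). split; [apply Rmin_glb_lt; auto|].
    intros y t Uy H1 H2. assert (Rmin d1 dc <= d1) by apply Rmin_l.
    assert (Rmin d1 dc <= dc) by apply Rmin_r.
    assert (Hgy : gU t y) by (apply Ht; lra).
    unfold K. do 2 (destruct excluded_middle_informative; try contradiction).
    eapply Rle_lt_trans; [apply Del_SS_le|].
    assert (Defs.dist X (phi t0 x0) (phi t y) < eps/2) by (apply Hc; auto; try lra; apply gU_G; auto).
    lra.
  - assert (KN : K x0 t0 = None) by (unfold K; destruct excluded_middle_informative; [contradiction|auto]).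
    rewrite KN.
    destruct (classic (exists s, J t0 s /\ Gamma s x0 /\ ~ mclosure U (phi s x0))) as [[s [Js [Gs Hnc]]]|Hno].
    + assert (Heta : exists eta, 0 < eta /\ forall z, U z -> eta <= Defs.dist X (phi s x0) z).
      { apply NNPP. intros Hn. apply Hnc. intros e He. apply NNPP. intros Hn2.
        apply Hn. exists e. split; auto. intros z Uz. apply Rnot_lt_le. intros Hlt.
        apply Hn2. exists z; auto. }
      destruct Heta as [eta [Heta Heta']].
      destruct (phi_cont s x0 Gs eta Heta) as [dc [Hdc Hc]].
      exists dc. split; auto. intros y t Uy H1 H2.
      unfold K. destruct excluded_middle_informative as [Hgy|_]; [|rewrite Del_refl; lra].
      exfalso. destruct (clamp t0 t s Js) as [s' [Js' Hss]].
      destruct Hgy as [_ Hgy]. destruct (Hgy s' Js') as [G' U'].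
      specialize (Heta' _ U').
      assert (Defs.dist X (phi s x0) (phi s' y) < eta).
      { apply Hc; auto. rewrite Rabs_minus_sym. rewrite Rabs_minus_sym in H1. lra. }
      lra.
    + assert (Hcl : forall s, J t0 s -> Gamma s x0 -> mclosure U (phi s x0)).
      { intros s Js Gs. apply NNPP. intros Hn. apply Hno. exists s; auto. }
      destruct (B2 t0 x0 Ux0 Hng Hcl) as [Gt0 Nt0].
      assert (h0 : hf (phi t0 x0) = 0).
      { pose proof (hf_bounds (phi t0 x0)). destruct (Rle_lt_or_eq_dec 0 _ (proj1 H)); auto.
        exfalso; apply Nt0, hf_U; auto. }
      destruct (phi_cont t0 x0 Gt0 eps Heps) as [dc [Hdc Hc]].
      exists dc. split; auto. intros y t Uy H1 H2.
      unfold K. destruct excluded_middle_informative as [Hgy|_]; [|rewrite Del_refl; lra].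
      rewrite Del_NS. pose proof (hf_lip1 (phi t y) (phi t0 x0)).
      rewrite Defs.dist_sym in H. assert (Defs.dist X (phi t0 x0) (phi t y) < eps).
      { apply Hc; auto. apply gU_G; auto. }
      lra.
Qed.

End Main.

Theorem mainTheorem2 (X : MetricSpace) (Gamma : R -> X -> Prop) (phi : R -> X -> X)
  (U : X -> Prop) :
  partial_flow Gamma phi ->
  mopen U ->
  phi_convex Gamma phi U ->
  mcompact (mclosure U) ->
  Ue_metrizable Gamma phi U.
Proof.
  intros PF HUo HC HK.
  exists (dm X Gamma phi U). split.
  - eapply dm_metric; eauto.
  - intros W. split.
    + eapply to_mopen; eauto.
    + eapply from_mopen; eauto. intros x0 Ux0. eapply PC; eauto.
Qed.
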